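(* Let $A$ be a dense subspace of a topological space $X$. If $C(A)$ has the countable sup property, then $C(X)$ has the countable sup property.
   Context: $C(Y)$ denotes the vector lattice of all real-valued continuous functions on a space $Y$ with the pointwise order. A vector lattice has the countable sup property if every nonempty subset possessing a supremum contains a countable subset with the same supremum. *)

(* Defs.v *)
From HB Require Import structures.
From mathcomp Require Import all_boot all_order all_algebra.
From mathcomp Require Import all_classical all_reals topology normedtype.

Import Order.TTheory GRing.Theory Num.Theory.
Import numFieldTopology.Exports.
Local Open Scope classical_set_scope.
Local Open Scope ring_scope.

Definition Cfun (R : realType) (Y : topologicalType) : set (Y -> R) :=
  [set f | continuous (f : Y -> R)].

Definition is_sup_C (R : realType) (Y : topologicalType)
    (S : set (Y -> R)) (g : Y -> R) : Prop :=
  [/\ Cfun R Y g,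
      (forall f, S f -> forall y, f y <= g y) &
      (forall h, Cfun R Y h -> (forall f, S f -> forall y, f y <= h y) ->
         forall y, g y <= h y)].

Definition countable_sup_property (R : realType) (Y : topologicalType) : Prop :=
  forall S : set (Y -> R), S `<=` Cfun R Y -> S !=set0 ->
  forall g, is_sup_C R Y S g ->
  exists T : set (Y -> R), [/\ T `<=` S, countable T & is_sup_C R Y T g].

(* Main.v *)
Require Import Defs.
From mathcomp Require Import all_boot all_order all_algebra all_classical all_reals topology normedtype.
From mathcomp Require Import lra.
Import Order.TTheory GRing.Theory Num.Theory.
Import numFieldTopology.Exports.
Local Open Scope classical_set_scope.
Local Open Scope ring_scope.

Section cont.
Variables (R : realType) (T : topologicalType).
Implicit Types f g : T -> R.
Lemma cC (c : R) : continuous (fun _ : T => c).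
Proof. by move=> x; apply: cst_continuous. Qed.
Lemma cD f g : continuous f -> continuous g -> continuous (fun x => f x + g x).
Proof. by move=> cf cg x; apply: (@continuousD _ R^o _ f g x (cf x) (cg x)). Qed.
Lemma cN f : continuous f -> continuous (fun x => - f x).
Proof. by move=> cf x; apply: (@continuousN _ R^o _ f x (cf x)). Qed.
Lemma cB f g : continuous f -> continuous g -> continuous (fun x => f x - g x).
Proof. by move=> cf cg; have := cD _ _ cf (cN _ cg). Qed.
Lemma cM f g : continuous f -> continuous g -> continuous (fun x => f x * g x).
Proof. by move=> cf cg x; apply: (@continuousM R T f g x (cf x) (cg x)). Qed.
Lemma cmin f g : continuous f -> continuous g -> continuous (fun x => Order.min (f x) (g x)).
Proof. by move=> cf cg; apply: (min_fun_continuous cf cg). Qed.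
Lemma cmax f g : continuous f -> continuous g -> continuous (fun x => Order.max (f x) (g x)).
Proof. by move=> cf cg; apply: (max_fun_continuous cf cg). Qed.
End cont.
Arguments cD {R T f g}. Arguments cN {R T f}. Arguments cB {R T f g}.
Arguments cM {R T f g}. Arguments cmin {R T f g}. Arguments cmax {R T f g}.

Section Key.
Variables (R : realType) (X : topologicalType) (A : set X).
Hypothesis dA : dense A.
Hypothesis hA : countable_sup_property R (set_type A).
Variables (S : set (X -> R)) (g : X -> R).
Hypotheses (SC : S `<=` Cfun R X) (S0 : S !=set0) (gC : continuous g).
Variable δ : R.

Definition ev (f : X -> R) (x : X) := δ - (g x - f x).

Lemma evC f : S f -> continuous (ev f).
Proof. by move=> Sf; apply: cB; [apply: cC | apply: cB => //; apply: SC]. Qed.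

Lemma cval (f : X -> R) : continuous f -> continuous (fun a : set_type A => f (set_val a)).
Proof.
move=> cf a; apply: (@continuous_comp _ _ _ set_val f); last exact: cf.
exact: initial_continuous.
Qed.

Definition fk (t : set_type A -> R) :=
  exists f, S f /\ forall a, 0 < t a -> 0 < ev f (set_val a).
Definition sk (t : set_type A -> R) :=
  forall f, S f -> forall a, 0 < t a -> ev f (set_val a) <= 0.
Definition S' : set (set_type A -> R) :=
  [set t | Cfun R _ t /\ (forall a, 0 <= t a <= 1) /\ (fk t \/ sk t)].

Lemma clamp01 (r : R) : 0 <= Order.max 0 (Order.min 1 r) <= 1.
Proof. by rewrite le_max lexx /= ge_max ler01 ge_min lexx. Qed.

Lemma S'sup : is_sup_C R (set_type A) S' (fun _ => 1).
Proof.
split; first exact: cC.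
  by move=> t [_ [t01 _]] a; case/andP: (t01 a).
move=> u uC ub.
have part : forall b f, S f -> 0 < ev f (set_val b) -> 1 <= u b.
  move=> b f Sf eb; rewrite leNgt; apply/negP => ub1.
  have ub1' : 0 < 1 - u b by rewrite subr_gt0.
  pose c1 := (1 - u b)^-1; pose c2 := (ev f (set_val b))^-1.
  pose t := fun a => Order.max 0 (Order.min 1
     (Order.min (c1 * (1 - u a)) (c2 * ev f (set_val a)))).
  have tb : t b = 1.
    rewrite /t /c1 /c2 mulVf ?gt_eqF // mulVf ?gt_eqF //.
    by rewrite !minxx maxEle ler01.
  have St : S' t.
    split.
      apply: cmax; first exact: cC.
      apply: cmin; first exact: cC.
      apply: cmin; apply: cM; try exact: cC.
        by apply: cB => //; exact: cC.
      by apply: cval; apply: evC.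
    split; first by move=> a; exact: clamp01.
    left; exists f; split => // a.
    rewrite /t lt_max ltxx /= !lt_min => /andP[_ /andP[_]].
    by rewrite pmulr_rgt0 // invr_gt0.
  by have := ub t St b; rewrite tb leNgt ub1.
move=> a; rewrite leNgt; apply/negP => ua1.
have ua1' : 0 < 1 - u a by rewrite subr_gt0.
pose c1 := (1 - u a)^-1.
pose t := fun b => Order.max 0 (Order.min 1 (c1 * (1 - u b))).
have ta : t a = 1 by rewrite /t /c1 mulVf ?gt_eqF // minxx maxEle ler01.
have St : S' t.
  split.
    apply: cmax; first exact: cC.
    apply: cmin; first exact: cC.
    by apply: cM; [exact: cC | apply: cB => //; exact: cC].
  split; first by move=> b; exact: clamp01.
  right => f Sf b; rewrite /t lt_max ltxx /= lt_min => /andP[_].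
  rewrite pmulr_rgt0 ?invr_gt0 // subr_gt0 => ub1.
  rewrite leNgt; apply/negP => eb.
  by have := part b f Sf eb; rewrite leNgt ub1.
by have := ub t St a; rewrite ta leNgt ua1.
Qed.

Lemma key : exists Tn : set (X -> R), [/\ Tn `<=` S, countable Tn &
  forall k : X -> R, continuous k ->
   (forall f, Tn f -> forall x, 0 < k x -> ev f x <= 0) ->
   forall f, S f -> forall x, 0 < k x -> ev f x <= 0].
Proof.
have S'C : S' `<=` Cfun R _ by move=> t [].
have S'ne : S' !=set0.
  exists (fun _ => 0); split; first exact: cC.
  by split; [move=> a; rewrite lexx ler01 | right => f _ a; rewrite ltxx].
have [T' [T'S' cT' supT']] := hA _ S'C S'ne _ S'sup.
have : forall t, exists f, S f /\ (fk t -> forall a, 0 < t a -> 0 < ev f (set_val a)).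
  move=> t; case: (pselect (fk t)) => [[f [Sf Hf]]|nfk].
    by exists f.
  by case: S0 => f Sf; exists f; split.
case/choice => w Hw.
exists (w @` T'); split.
- by move=> _ [t _ <-]; exact: (Hw t).1.
- by apply: sub_countable cT'; exact: card_image_le.
move=> k kc H f Sf x kx; rewrite leNgt; apply/negP => ex.
pose m := fun y => Order.min (k y) (ev f y).
have mC : continuous m by apply: cmin => //; exact: evC.
have mx : 0 < m x by rewrite /m lt_min kx ex.
have [y [my Ay]] : (m @^-1` [set r | 0 < r]) `&` A !=set0.
  apply: dA; first by exists x.
  by apply: open_comp; [move=> z _; exact: mC | exact: open_gt].
pose a : set_type A := exist _ y (mem_set Ay).
pose c := (m y)^-1.
pose u := fun b : set_type A => 1 - Order.max 0 (Order.min 1 (c * m (set_val b))).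
have uC : Cfun R _ u.
  apply: cB; first exact: cC.
  apply: cmax; first exact: cC.
  apply: cmin; first exact: cC.
  by apply: cM; [exact: cC | exact: cval].
have u0 : forall b, 0 <= u b.
  by move=> b; rewrite /u subr_ge0; case/andP: (clamp01 (c * m (set_val b))).
have ub : forall t, T' t -> forall b, t b <= u b.
  move=> t T't b; have [tc [t01 kind]] := T'S' t T't.
  case: (leP (t b) 0) => tb; first exact: (le_trans tb).
  have mb : m (set_val b) <= 0.
    case: kind => [fkt|skt].
      have := (Hw t).2 fkt b tb => ewb.
      have : k (set_val b) <= 0.
        rewrite leNgt; apply/negP => kb.
        by have := H (w t) (ex_intro2 _ _ t T't erefl) _ kb; rewrite leNgt ewb.
      by rewrite /m ge_min => ->.
    by rewrite /m ge_min (skt f Sf b tb) orbT.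
  have -> : u b = 1.
    rewrite /u (_ : Order.min 1 _ = c * m (set_val b)); last first.
      by apply/min_idPr; apply: (le_trans _ ler01); rewrite pmulr_rle0 // invr_gt0.
    by rewrite (_ : Order.max 0 _ = 0) ?subr0 //; apply/max_idPl; rewrite pmulr_rle0 // invr_gt0.
  by case/andP: (t01 b).
case: supT' => _ _ supl.
have := supl u uC ub a.
rewrite /u /= /c mulVf ?gt_eqF // minxx maxEle ler01 subrr.
by rewrite leNgt ltr01.
Qed.

End Key.

Theorem corollary4p12 (R : realType) (X : topologicalType) (A : set X) :
  dense A -> countable_sup_property R (set_type A) ->
  countable_sup_property R X.
Proof.
move=> dA hA S SC S0 g [gC gub gleast].
have : forall n : nat, exists Tn : set (X -> R), [/\ Tn `<=` S, countable Tn &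
  forall k : X -> R, continuous k ->
   (forall f, Tn f -> forall x, 0 < k x -> n.+1%:R^-1 - (g x - f x) <= 0) ->
   forall f, S f -> forall x, 0 < k x -> n.+1%:R^-1 - (g x - f x) <= 0].
  by move=> n; exact: (@key R X A dA hA S g SC S0 gC n.+1%:R^-1).
case/choice => Tf HT.
exists (\bigcup_(n in setT) Tf n); split.
- by move=> f [n _ Tnf]; case: (HT n) => + _ _; apply.
- by apply: bigcup_countable => // n _; case: (HT n).
split => //.
  by move=> f [n _ Tnf]; apply: gub; case: (HT n) => + _ _; apply.
move=> h hC hub.
have H : forall n y, g y - h y <= n.+1%:R^-1.
  move=> n; case: (HT n) => _ _ K.
  have δ0 : 0 < n.+1%:R^-1 :> R by rewrite invr_gt0 ltr0Sn.
  move: δ0 K; set δ := n.+1%:R^-1 => δ0 K.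
  pose k := fun y => g y - h y - δ.
  have kC : continuous k by apply: cB; [apply: cB | apply: cC].
  have Hs : forall f, S f -> forall x, 0 < k x -> δ - (g x - f x) <= 0.
    apply: K => // f Tnf x kx.
    have fh : f x <= h x by apply: hub; exists n.
    rewrite /k in kx; lra.
  pose u := fun y => g y - Order.max 0 (Order.min δ (k y)).
  have uC : continuous u.
    apply: cB => //; apply: cmax; first exact: cC.
    by apply: cmin => //; exact: cC.
  have ub : forall f, S f -> forall x, f x <= u x.
    move=> f Sf x; rewrite /u; case: (ltP 0 (k x)) => kx.
      have := Hs f Sf x kx.
      have : Order.max 0 (Order.min δ (k x)) <= δ by rewrite ge_max ltW // ge_min lexx.
      lra.
    have -> : Order.max 0 (Order.min δ (k x)) = 0.
      by apply/max_idPl; rewrite ge_min kx orbT.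
    by rewrite subr0; exact: gub.
  move=> y; have := gleast u uC ub y; rewrite /u => le.
  have : Order.max 0 (Order.min δ (k y)) <= 0 by lra.
  rewrite ge_max lexx /= ge_min leNgt δ0 /= => ky.
  rewrite /k in ky; lra.
move=> y; rewrite leNgt; apply/negP => hy.
have d0 : 0 < g y - h y by rewrite subr_gt0.
have [n hn] : exists n : nat, (g y - h y)^-1 < n.+1%:R.
  by exists (Num.Def.trunc (g y - h y)^-1); exact: truncnS_gt.
have := H n y.
rewrite invf_plt ?posrE ?ltr0Sn // in hn.
by rewrite leNgt hn.
Qed.
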